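(* Let $\mathcal{X}=\{\boldsymbol{x}_1,\dots,\boldsymbol{x}_N\}\subseteq\mathbb{R}^D$ with $\|\boldsymbol{x}_j\|_2=1$ for all $j$, and let $\lambda\in(1,\infty)$. For each $j\in\{1,\dots,N\}$: (i) for every $\mathcal{X}_0\subseteq\mathcal{X}$, $f_\lambda(\boldsymbol{x}_j,\mathcal{X}_0)\in[1-\frac{1}{2\lambda},\frac{\lambda}{2}]$; (ii) $f_\lambda(\boldsymbol{x}_j,\emptyset)=\lambda/2$; (iii) for $\mathcal{X}_0\subseteq\mathcal{X}$, $f_\lambda(\boldsymbol{x}_j,\mathcal{X}_0)=1-\frac{1}{2\lambda}$ if and only if at least one of $\boldsymbol{x}_j$ or $-\boldsymbol{x}_j$ belongs to $\mathcal{X}_0$.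
   Context: For $\mathcal{X}_0\subseteq\mathcal{X}$ nonempty and $\boldsymbol{x}_j\in\mathcal{X}$, define $f_\lambda(\boldsymbol{x}_j,\mathcal{X}_0):=\min_{\boldsymbol{c}\in\mathbb{R}^N}\|\boldsymbol{c}\|_1+\frac{\lambda}{2}\|\boldsymbol{x}_j-\sum_{i:\boldsymbol{x}_i\in\mathcal{X}_0}c_i\boldsymbol{x}_i\|_2^2$, and by convention $f_\lambda(\boldsymbol{x}_j,\emptyset):=\lambda/2$. *)

(* Defs.v *)
From mathcomp Require Import all_boot all_order all_algebra.
From mathcomp Require Import all_classical all_reals.
Set Implicit Arguments. Unset Strict Implicit. Unset Printing Implicit Defensive.
Import Order.TTheory GRing.Theory Num.Theory.
Local Open Scope classical_set_scope.
Local Open Scope ring_scope.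

Definition sqnorm2 (R : realType) (D : nat) (v : 'rV[R]_D) : R :=
  \sum_(k < D) (v 0 k) ^+ 2.

Definition norm1 (R : realType) (N : nat) (c : 'I_N -> R) : R :=
  \sum_(i < N) `|c i|.

Definition fobj (R : realType) (D N : nat) (lam : R) (x : 'I_N -> 'rV[R]_D)
  (xj : 'rV[R]_D) (X0 : set 'rV[R]_D) (c : 'I_N -> R) : R :=
  norm1 c + lam / 2 * sqnorm2 (xj - \sum_(i < N | x i \in X0) c i *: x i).

(* f_lam(xj, X0) := min_c fobj (the minimum is attained; we take the infimum
   of the set of objective values), with convention f_lam(xj, emptyset) = lam/2 *)
Definition f_lam (R : realType) (D N : nat) (lam : R) (x : 'I_N -> 'rV[R]_D)
  (xj : 'rV[R]_D) (X0 : set 'rV[R]_D) : R :=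
  if `[< X0 = set0 >] then lam / 2
  else inf [set fobj lam x xj X0 c | c in [set: 'I_N -> R]].

(* Main.v *)
Require Import Defs.
From mathcomp Require Import all_boot all_order all_algebra.
From mathcomp Require Import all_classical all_reals.
From mathcomp Require Import ring lra.
Import Order.TTheory GRing.Theory Num.Theory.
Local Open Scope classical_set_scope.
Local Open Scope ring_scope.
Set Implicit Arguments. Unset Strict Implicit. Unset Printing Implicit Defensive.

Section H.
Variables (R : realType) (D : nat).
Implicit Types u v w : 'rV[R]_D.

Definition dot u w : R := \sum_(k < D) u 0 k * w 0 k.

Lemma sqnorm2_dot u : sqnorm2 u = dot u u.
Proof. by apply: eq_bigr => k _; rewrite expr2. Qed.

Lemma dotB u v w : dot u (v - w) = dot u v - dot u w.
Proof. by rewrite /dot -sumrB; apply: eq_bigr => k _; rewrite !mxE mulrBr. Qed.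

Lemma sqnormB u w : sqnorm2 (u - w) = sqnorm2 u - 2 * dot u w + sqnorm2 w.
Proof.
rewrite /sqnorm2 /dot mulr_sumr -sumrB -big_split /=; apply: eq_bigr => k _.
rewrite !mxE; ring.
Qed.

Lemma sqnormD u w : sqnorm2 (u + w) = sqnorm2 u + 2 * dot u w + sqnorm2 w.
Proof.
rewrite /sqnorm2 /dot mulr_sumr -!big_split /=; apply: eq_bigr => k _.
rewrite !mxE; ring.
Qed.

Lemma sqnormZ (a : R) u : sqnorm2 (a *: u) = a ^+ 2 * sqnorm2 u.
Proof. rewrite /sqnorm2 mulr_sumr; apply: eq_bigr => k _; rewrite !mxE; ring. Qed.

Lemma dotZ (a : R) u w : dot u (a *: w) = a * dot u w.
Proof. rewrite /dot mulr_sumr; apply: eq_bigr => k _; rewrite !mxE; ring. Qed.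

Lemma dotC u w : dot u w = dot w u.
Proof. by apply: eq_bigr => k _; rewrite mulrC. Qed.

Lemma sqnorm_ge0 u : 0 <= sqnorm2 u.
Proof. by apply: sumr_ge0 => k _; rewrite sqr_ge0. Qed.

Lemma sqnorm_eq0 u : sqnorm2 u = 0 -> u = 0.
Proof.
move=> h; apply/matrixP => i k; rewrite (ord1 i) mxE.
have := psumr_eq0P (fun k _ => sqr_ge0 (u 0 k)) h (i:=k) isT.
by move/eqP; rewrite sqrf_eq0 => /eqP.
Qed.

Lemma dot_sum (I : finType) (P : pred I) (c : I -> R) (y : I -> 'rV[R]_D) u :
  dot u (\sum_(i | P i) c i *: y i) = \sum_(i | P i) c i * dot u (y i).
Proof.
rewrite /dot.
under eq_bigr => k _ do rewrite summxE big_distrr /=.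
rewrite exchange_big /=; apply: eq_bigr => i _.
rewrite mulr_sumr; apply: eq_bigr => k _; rewrite !mxE; ring.
Qed.

Lemma dot_unit u w : sqnorm2 u = 1 -> sqnorm2 w = 1 -> `|dot u w| <= 1.
Proof.
move=> hu hw; have h1 := sqnorm_ge0 (u - w); have h2 := sqnorm_ge0 (u + w).
rewrite sqnormB hu hw in h1; rewrite sqnormD hu hw in h2.
rewrite ler_norml; apply/andP; split.
all: lra.
Qed.

Lemma dot_unit_eq1 u w : sqnorm2 u = 1 -> sqnorm2 w = 1 -> dot u w = 1 -> w = u.
Proof.
move=> hu hw hd; have : sqnorm2 (u - w) = 0 by rewrite sqnormB hu hw hd; ring.
by move/sqnorm_eq0/eqP; rewrite subr_eq0 => /eqP.
Qed.

Lemma dot_unit_eqN1 u w : sqnorm2 u = 1 -> sqnorm2 w = 1 -> dot u w = -1 -> w = - u.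
Proof.
move=> hu hw hd; have : sqnorm2 (u + w) = 0 by rewrite sqnormD hu hw hd; ring.
by move/sqnorm_eq0/eqP; rewrite addrC addr_eq0 => /eqP.
Qed.

Lemma proj_le u w : sqnorm2 u = 1 -> dot u w ^+ 2 <= sqnorm2 w.
Proof.
move=> hu; have h := sqnorm_ge0 (w - dot u w *: u).
rewrite sqnormB sqnormZ hu dotZ (dotC w u) in h.
nra.
Qed.
End H.
Section Key.
Variable R : realType.

Lemma key (lam rho t s q : R) : 1 < lam -> 0 <= rho <= 1 -> 0 <= t ->
  `|s| <= rho * t -> (1 - s) ^+ 2 <= q ->
  1 - 1 / (2 * lam) + Num.min ((1 - rho) * (1 - lam^-1) / 2)
     (lam * (1 - lam^-1) ^+ 2 / 8) <= t + lam / 2 * q.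
Proof.
move=> hl /andP[r0 r1] t0 hs hq.
set b := lam^-1.
have l0 : 0 < lam by lra.
have hb : lam * b = 1 by rewrite /b mulfV // gt_eqF.
have b0 : 0 < b by rewrite /b invr_gt0.
have b1 : b < 1 by rewrite /b invf_lt1.
have e1 : 1 / (2 * lam) = b / 2 by rewrite /b invfM mul1r mulrC.
rewrite e1; clearbody b.
have sle : s <= rho * t by apply: le_trans hs; rewrite real_ler_norm ?num_real.
have ts : (1 - rho) * t <= t - s by lra.
have st : s <= t by nra.
have id : lam / 2 * (1 - s) ^+ 2 = lam / 2 * ((1 - b) - s) ^+ 2 + (1 - s) - b / 2.
  have -> : lam / 2 * ((1 - b) - s) ^+ 2
      = lam / 2 * (1 - s) ^+ 2 - (lam * b) * (1 - s) + (lam * b) * b / 2 by field.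
  by rewrite hb; field.
have hq' : lam / 2 * (1 - s) ^+ 2 <= lam / 2 * q.
  by rewrite ler_wpM2l // divr_ge0 // ltW.
have sq0 : 0 <= lam / 2 * ((1 - b) - s) ^+ 2 by rewrite mulr_ge0 ?sqr_ge0 // divr_ge0 // ltW.
case: (leP ((1 - b) / 2) s) => hs2.
- have h1 : (1 - rho) * (1 - b) / 2 <= t - s.
    apply: le_trans ts; rewrite -mulrA ler_wpM2l ?subr_ge0 //; lra.
  have : Num.min ((1 - rho) * (1 - b) / 2) (lam * (1 - b) ^+ 2 / 8)
     <= (1 - rho) * (1 - b) / 2 by rewrite ge_min lexx.
  lra.
- have h2 : ((1 - b) / 2) ^+ 2 <= ((1 - b) - s) ^+ 2.
    rewrite ler_sqr ?nnegrE; lra.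
  have h3 : lam * (1 - b) ^+ 2 / 8 <= lam / 2 * ((1 - b) - s) ^+ 2.
    apply: le_trans (_ : lam / 2 * ((1 - b) / 2) ^+ 2 <= _).
      by rewrite le_eqVlt; apply/orP; left; apply/eqP; field.
    by rewrite ler_wpM2l // divr_ge0 // ltW.
  have : Num.min ((1 - rho) * (1 - b) / 2) (lam * (1 - b) ^+ 2 / 8)
     <= lam * (1 - b) ^+ 2 / 8 by rewrite ge_min lexx orbT.
  lra.
Qed.
End Key.
Section Main.
Variables (R : realType) (D N : nat) (x : 'I_N -> 'rV[R]_D) (lam : R).
Hypothesis hunit : forall j, sqnorm2 (x j) = 1.
Hypothesis hlam : 1 < lam.
Variable j : 'I_N.

Local Notation L := (1 - 1 / (2 * lam)).

Lemma norm1_ge0 (c : 'I_N -> R) : 0 <= norm1 c.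
Proof. by apply: sumr_ge0 => i _. Qed.

Lemma sum_bound (X0 : set 'rV[R]_D) (c : 'I_N -> R) rho : 0 <= rho ->
  (forall i, x i \in X0 -> `|dot (x j) (x i)| <= rho) ->
  `|\sum_(i | x i \in X0) c i * dot (x j) (x i)| <= rho * norm1 c.
Proof.
move=> r0 hr; apply: le_trans (ler_norm_sum _ _ _) _.
rewrite /norm1 mulr_sumr big_mkcond /=; apply: ler_sum => i _.
case: ifP => hi; last by rewrite mulr_ge0.
by rewrite normrM [rho * _]mulrC ler_wpM2l // hr.
Qed.

Lemma fobj_ge (X0 : set 'rV[R]_D) (c : 'I_N -> R) rho : 0 <= rho <= 1 ->
  (forall i, x i \in X0 -> `|dot (x j) (x i)| <= rho) ->
  L + Num.min ((1 - rho) * (1 - lam^-1) / 2) (lam * (1 - lam^-1) ^+ 2 / 8)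
   <= fobj lam x (x j) X0 c.
Proof.
move=> /andP[r0 r1] hr; rewrite /fobj.
apply: key => //; first by rewrite r0 r1.
  exact: norm1_ge0.
  exact: (sum_bound c r0 hr).
apply: le_trans (proj_le _ (hunit j)).
by rewrite dotB dot_sum -sqnorm2_dot hunit.
Qed.

Lemma fobj_L (X0 : set 'rV[R]_D) (c : 'I_N -> R) : L <= fobj lam x (x j) X0 c.
Proof.
apply: le_trans (fobj_ge c (rho := 1) _ _).
- rewrite lerDl le_min subrr !mul0r lexx /=.
  have l0 : 0 < lam by apply: lt_trans hlam.
  by rewrite divr_ge0 // mulr_ge0 ?sqr_ge0 // ltW.
- by rewrite ler01 lexx.
- move=> i _; exact: dot_unit.
Qed.

Lemma fobj0 (X0 : set 'rV[R]_D) : fobj lam x (x j) X0 (fun _ => 0) = lam / 2.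
Proof.
rewrite /fobj /norm1 big1 ?normr0 // add0r big1 ?subr0 ?hunit ?mulr1 //.
by move=> i _; rewrite scale0r.
Qed.

Lemma fobj_single (X0 : set 'rV[R]_D) k (a : R) : x k \in X0 ->
  fobj lam x (x j) X0 (fun i => if i == k then a else 0)
  = `|a| + lam / 2 * sqnorm2 (x j - a *: x k).
Proof.
move=> hk; rewrite /fobj /norm1 (bigD1 k) //= eqxx big1 ?addr0; last first.
  by move=> i /negPf ->; rewrite normr0.
rewrite (bigD1 k) //= eqxx big1 ?addr0 //.
by move=> i /andP[_ /negPf ->]; rewrite scale0r.
Qed.

Let E (X0 : set 'rV[R]_D) := [set fobj lam x (x j) X0 c | c in [set: 'I_N -> R]].

Lemma E_lb X0 : lbound (E X0) L.
Proof. by move=> y [c _ <-]; exact: fobj_L. Qed.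

Lemma E_ne X0 : E X0 !=set0.
Proof. by exists (fobj lam x (x j) X0 (fun _ => 0)); exists (fun _ => 0). Qed.

Lemma inf_le_E X0 c : inf (E X0) <= fobj lam x (x j) X0 c.
Proof.
apply: ge_inf; first by exists L; exact: E_lb.
by exists c.
Qed.

Lemma L_le_inf X0 : L <= inf (E X0).
Proof. apply: lb_le_inf; [exact: E_ne | exact: E_lb]. Qed.


Lemma gap X0 : ~ (x j \in X0 \/ - x j \in X0) -> L < inf (E X0).
Proof.
move=> hn.
set rho := \big[Num.max/0]_(i | x i \in X0) `|dot (x j) (x i)|.
have hr : forall i, x i \in X0 -> `|dot (x j) (x i)| <= rho.
  by move=> i hi; exact: le_bigmax_cond.
have r0 : 0 <= rho by apply/bigmax_geP; left.
have r1 : rho < 1.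
  apply: bigmax_lt => // i hi.
  rewrite lt_neqAle dot_unit // andbT.
  apply/negP; rewrite eqr_norml => /andP[/orP[/eqP h|/eqP h] _].
  - by apply: hn; left; rewrite -(dot_unit_eq1 (hunit j) (hunit i) h).
  - by apply: hn; right; rewrite -(dot_unit_eqN1 (hunit j) (hunit i) h).
have l0 : 0 < lam by apply: lt_trans hlam.
have b1 : 0 < 1 - lam^-1 by rewrite subr_gt0 invf_lt1.
have e0 : 0 < Num.min ((1 - rho) * (1 - lam^-1) / 2) (lam * (1 - lam^-1) ^+ 2 / 8).
  rewrite lt_min; apply/andP; split.
  - by rewrite divr_gt0 // mulr_gt0 // subr_gt0.
  - by rewrite divr_gt0 // mulr_gt0 // exprn_gt0.
apply: lt_le_trans (_ : L + Num.min ((1 - rho) * (1 - lam^-1) / 2)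
   (lam * (1 - lam^-1) ^+ 2 / 8) <= _); first by rewrite ltrDl.
apply: lb_le_inf; first exact: E_ne.
move=> y [c _ <-]; apply: fobj_ge => //; by rewrite r0 ltW.
Qed.

Lemma L_lt : L < lam / 2.
Proof.
have l0 : 0 < lam by apply: lt_trans hlam.
have hb : lam * lam^-1 = 1 by rewrite mulfV // gt_eqF.
have b1 : lam^-1 < 1 by rewrite invf_lt1.
have -> : 1 / (2 * lam) = lam^-1 / 2 by rewrite invfM mul1r mulrC.
move: hb b1; move: (lam^-1) => b hb b1.
have h : 0 < (lam - 1) * (1 - b) by rewrite mulr_gt0 // subr_gt0.
have e : (lam - 1) * (1 - b) = lam + b - 1 - lam * b by ring.
rewrite e hb in h; lra.
Qed.

Lemma val_a : (1 - lam^-1) + lam / 2 * sqnorm2 (x j - (1 - lam^-1) *: x j) = L.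
Proof.
have l0 : 0 < lam by apply: lt_trans hlam.
rewrite -{1}(scale1r (x j)) -scalerBl sqnormZ hunit.
by field; rewrite gt_eqF.
Qed.

Lemma main_j :
    (forall X0 : set 'rV[R]_D, X0 `<=` range x ->
       1 - 1 / (2 * lam) <= f_lam lam x (x j) X0 <= lam / 2)
    /\ f_lam lam x (x j) set0 = lam / 2
    /\ (forall X0 : set 'rV[R]_D, X0 `<=` range x ->
       (f_lam lam x (x j) X0 = 1 - 1 / (2 * lam) <->
        (x j \in X0 \/ - x j \in X0))).
Proof.
have l0 : 0 < lam by apply: lt_trans hlam.
have a0 : 0 <= 1 - lam^-1 by rewrite subr_ge0 ltW // invf_lt1.
split; [|split].
- move=> X0 _; rewrite /f_lam; case: asboolP => [_|hne].
  + by apply/andP; split; [exact: ltW L_lt | exact: lexx].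
  + apply/andP; split; first exact: L_le_inf.
    rewrite -(fobj0 X0); exact: inf_le_E.
- by rewrite /f_lam asboolT.
- move=> X0 hX; split.
  + move=> hf; apply: contrapT => hn; move: hf; rewrite /f_lam.
    case: asboolP => [_|hne] h.
    * by move: L_lt; rewrite h ltxx.
    * by move: (gap hn); rewrite /E h ltxx.
  + move=> hor.
    have hne : X0 <> set0.
      by move=> e; case: hor; rewrite e in_setE.
    rewrite /f_lam asboolF //; apply/eqP; rewrite eq_le L_le_inf andbT.
    case: hor => h.
    * apply: le_trans (inf_le_E X0 (fun i => if i == j then 1 - lam^-1 else 0)) _.
      by rewrite fobj_single // ger0_norm // val_a.
    * have [k _ hk] := hX _ (set_mem h).
      have hk' : x k \in X0 by rewrite hk.
      apply: le_trans (inf_le_E X0 (fun i => if i == k then - (1 - lam^-1) else 0)) _.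
      by rewrite fobj_single // normrN ger0_norm // hk scaleNr scalerN opprK val_a.
Qed.

End Main.


Theorem lemma2 (R : realType) (D N : nat) (x : 'I_N -> 'rV[R]_D) (lam : R)
  (hunit : forall j, sqnorm2 (x j) = 1) (hlam : 1 < lam) :
  forall j : 'I_N,
    (forall X0 : set 'rV[R]_D, X0 `<=` range x ->
       1 - 1 / (2 * lam) <= f_lam lam x (x j) X0 <= lam / 2)
    /\ f_lam lam x (x j) set0 = lam / 2
    /\ (forall X0 : set 'rV[R]_D, X0 `<=` range x ->
       (f_lam lam x (x j) X0 = 1 - 1 / (2 * lam) <->
        (x j \in X0 \/ - x j \in X0))).
Proof. move=> j; exact: (main_j hunit hlam j). Qed.
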